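(* There is $\mathcal{F}\subseteq[\mathbb{N}]^{<\omega}$ such that there is no Borel function $S:2^{\mathbb{N}}\to 2^{\mathbb{N}}$ satisfying, for every infinite $x\subseteq\mathbb{N}$, $S(x)\subseteq x$, $S(x)$ infinite, and $S(x)\in hom(\mathcal{F})$.
   Context: Subsets of $\mathbb{N}$ are identified with elements of $2^{\mathbb{N}}$. For finite $s$ and $t\subseteq\mathbb{N}$ (finite or infinite), $s\sqsubseteq t$ ($s$ is an initial segment of $t$) means $s=t\cap\{0,1,\dots,n\}$ for some $n\in\mathbb{N}$. For $\mathcal{F}\subseteq[\mathbb{N}]^{<\omega}$, a set $y\subseteq\mathbb{N}$ is $\mathcal{F}$-homogeneous if either (a) for every infinite $z\subseteq y$ there is $s\in\mathcal{F}$ with $s\sqsubseteq z$, or (b) no finite subset of $y$ belongs to $\mathcal{F}$. $hom(\mathcal{F})$ denotes the set of infinite $\mathcal{F}$-homogeneous sets. *)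

(* Defs.v *)
(* Subsets of N are identified with elements of 2^N = nat -> bool. *)
From Stdlib Require Import Arith.

Definition cantor := nat -> bool.

Definition infinite_set (x : cantor) : Prop :=
  forall n : nat, exists m : nat, n <= m /\ x m = true.

Definition finite_set (x : cantor) : Prop :=
  exists n : nat, forall m : nat, x m = true -> m < n.

Definition subset (y x : cantor) : Prop :=
  forall m : nat, y m = true -> x m = true.

Definition init_seg (s t : cantor) : Prop :=
  exists n : nat, forall m : nat, s m = andb (t m) (Nat.leb m n).

Definition family_of_finite (F : cantor -> Prop) : Prop :=
  forall s, F s -> finite_set s.

Definition homogeneous (F : cantor -> Prop) (y : cantor) : Prop :=
  (forall z, subset z y -> infinite_set z -> exists s, F s /\ init_seg s z)
  \/ (forall s, finite_set s -> subset s y -> ~ F s).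

Definition in_hom (F : cantor -> Prop) (y : cantor) : Prop :=
  infinite_set y /\ homogeneous F y.

(* Borel subsets of 2^N: the sigma-algebra generated by the subbasic
   clopen sets {x | x n = b}. *)
Inductive borel : (cantor -> Prop) -> Prop :=
| borel_basic : forall (n : nat) (b : bool), borel (fun x => x n = b)
| borel_compl : forall A, borel A -> borel (fun x => ~ A x)
| borel_union : forall A : nat -> cantor -> Prop,
    (forall i, borel (A i)) -> borel (fun x => exists i, A i x)
| borel_ext : forall A B, borel A -> (forall x, A x <-> B x) -> borel B.

Definition borel_fun (S : cantor -> cantor) : Prop :=
  forall B, borel B -> borel (fun x => B (S x)).

(* Main.v *)
Require Import Defs.
From Stdlib Require Import Arith Lia Classical ClassicalEpsilon Cantor List Bool.
Import ListNotations.


Lemma of_nat_le1 n : fst (Cantor.of_nat n) <= n.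
Proof. rewrite <- (Cantor.cancel_to_of n) at 2. destruct (Cantor.of_nat n) as [a b].
  cbn [fst snd]. pose proof (Cantor.to_nat_non_decreasing a b). lia. Qed.
Lemma of_nat_le2 n : snd (Cantor.of_nat n) <= n.
Proof. rewrite <- (Cantor.cancel_to_of n) at 2. destruct (Cantor.of_nat n) as [a b].
  cbn [fst snd]. pose proof (Cantor.to_nat_non_decreasing a b). lia. Qed.
Lemma to_nat_mono a b a' b' : a <= a' -> b <= b' -> Cantor.to_nat (a,b) <= Cantor.to_nat (a',b').
Proof. intros. pose proof (Cantor.to_nat_spec a b). pose proof (Cantor.to_nat_spec a' b').
  assert ((b + a) * S (b + a) <= (b' + a') * S (b' + a')) by (apply Nat.mul_le_mono; lia).
  lia. Qed.
Lemma to_nat_ge1 a b : a <= Cantor.to_nat (a,b).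
Proof. pose proof (Cantor.to_nat_non_decreasing a b). lia. Qed.

Lemma borel_or A B : borel A -> borel B -> borel (fun x => A x \/ B x).
Proof. intros HA HB.
  apply borel_ext with (A := fun x => exists i, (match i with 0 => A | _ => B end) x).
  - apply borel_union. intros [|i]; auto.
  - intros x; split. intros [[|i] H]; auto. intros [H|H]. exists 0; auto. exists 1; auto.
Qed.
Lemma borel_and A B : borel A -> borel B -> borel (fun x => A x /\ B x).
Proof. intros HA HB.
  apply borel_ext with (A := fun x => ~ (~ A x \/ ~ B x)).
  - apply borel_compl, borel_or; apply borel_compl; auto.
  - intros x; tauto.
Qed.
Lemma borel_true : borel (fun _ => True).
Proof. apply borel_ext with (A := fun x => x 0 = true \/ x 0 = false).
  apply borel_or; apply borel_basic. intros x; destruct (x 0); tauto. Qed.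
Lemma borel_false : borel (fun _ => False).
Proof. apply borel_ext with (A := fun x => ~ True). apply borel_compl, borel_true. tauto. Qed.

Definition upd (y : cantor) N b : cantor := fun q => if q =? N then b else y q.

Lemma borel_local : forall N (P : cantor -> Prop),
  (forall y y', (forall q, q < N -> y q = y' q) -> P y -> P y') -> borel P.
Proof.
  induction N; intros P HP.
  - destruct (classic (exists y, P y)) as [[y0 H0]|H].
    + apply borel_ext with (A := fun _ => True). apply borel_true.
      intros x; split; auto. intros _. apply (HP y0); auto. intros; lia.
    + apply borel_ext with (A := fun _ => False). apply borel_false.
      intros x; split; [tauto|]. intros Hx; apply H; eauto.
  - assert (Hb : forall b, borel (fun y => P (upd y N b))).
    { intro b. apply IHN. intros y y' Hyy' Hy. apply (HP (upd y N b) (upd y' N b)); [|exact Hy].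
      intros q Hq; unfold upd; destruct (q =? N) eqn:E; auto.
      apply Nat.eqb_neq in E; apply Hyy'; lia. }
    apply borel_ext with (A := fun y => (y N = true /\ P (upd y N true)) \/ (y N = false /\ P (upd y N false))).
    + apply borel_or; apply borel_and; try apply borel_basic; apply Hb.
    + intros y; split.
      * intros [[H1 H2]|[H1 H2]]; [apply (HP (upd y N true) y)|apply (HP (upd y N false) y)]; auto;
        intros q Hq; unfold upd; destruct (q =? N) eqn:E; auto;
        apply Nat.eqb_eq in E; subst; auto.
      * intros Hy. destruct (y N) eqn:E; [left|right]; split; auto;
        apply (HP y); auto; intros q Hq; unfold upd; destruct (q =? N) eqn:E'; auto;
        apply Nat.eqb_eq in E'; subst; auto.
Qed.

Lemma borel_fun_of_coord (G : cantor -> cantor) :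
  (forall n b, borel (fun y => G y n = b)) -> borel_fun G.
Proof.
  intros H B HB. induction HB.
  - apply H.
  - apply borel_compl; auto.
  - apply borel_union; auto.
  - apply borel_ext with (A := fun x => A (G x)); auto.
Qed.


Inductive code := CB (n : nat) (b : bool) | CC (c : code) | CU (f : nat -> code).
Fixpoint ev (c : code) (y : cantor) : Prop :=
  match c with CB n b => y n = b | CC d => ~ ev d y | CU f => exists i, ev (f i) y end.

Lemma borel_code B : borel B -> exists c, forall y, B y <-> ev c y.
Proof.
  intro H; induction H.
  - exists (CB n b); simpl; tauto.
  - destruct IHborel as [c Hc]. exists (CC c); simpl; intro y; rewrite Hc; tauto.
  - assert (Hf : exists f : nat -> code, forall i y, A i y <-> ev (f i) y).
    { exists (fun i => proj1_sig (constructive_indefinite_description _ (H0 i))).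
      intros i; exact (proj2_sig (constructive_indefinite_description _ (H0 i))). }
    destruct Hf as [f Hf]. exists (CU f); simpl; intro y; split;
    intros [i Hi]; exists i; apply Hf; auto.
  - destruct IHborel as [c Hc]. exists c. intro y; rewrite <- H0; auto.
Qed.

Fixpoint sub (c : code) (a : list nat) : option code :=
  match a with
  | [] => Some c
  | i :: a' => match sub c a' with Some (CC d) => Some d | Some (CU f) => Some (f i) | _ => None end
  end.

Definition child p i := S (Cantor.to_nat (p, i)).
Fixpoint nnum (a : list nat) : nat :=
  match a with [] => 0 | i :: a' => child (nnum a') i end.

Lemma nnum_inj : forall a b, nnum a = nnum b -> a = b.
Proof.
  induction a; destruct b; cbn [nnum]; intros H; try discriminate; auto.
  unfold child in H. apply Nat.succ_inj in H. apply Cantor.to_nat_inj in H. rename H into H'.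
  injection H'; intros; subst. f_equal; auto.
Qed.

Definition lab (d : code) : nat :=
  match d with
  | CB n b => Cantor.to_nat (3, Cantor.to_nat (n, if b then 1 else 0))
  | CC _ => Cantor.to_nat (1, 0)
  | CU _ => Cantor.to_nat (2, 0)
  end.

Definition nodeOf (p : nat) : option (list nat) :=
  match excluded_middle_informative (exists a, nnum a = p) with
  | left H => Some (proj1_sig (constructive_indefinite_description _ H))
  | right _ => None end.

Lemma nodeOf_nnum a : nodeOf (nnum a) = Some a.
Proof. unfold nodeOf. destruct excluded_middle_informative as [H|H].
  - f_equal. apply nnum_inj. exact (proj2_sig (constructive_indefinite_description _ H)).
  - exfalso; eauto. Qed.
Lemma nodeOf_spec p a : nodeOf p = Some a -> nnum a = p.
Proof. unfold nodeOf. destruct excluded_middle_informative as [H|H]; intro E; try discriminate.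
  injection E; intro; subst. exact (proj2_sig (constructive_indefinite_description _ H)). Qed.

Definition labAt c p : nat :=
  match nodeOf p with Some a => match sub c a with Some d => lab d | None => 0 end | None => 0 end.

Definition enc (c : code) : cantor := fun q => let (p, m) := Cantor.of_nat q in Nat.eqb m (labAt c p).

Definition mOf (f : nat -> nat) p := fst (Cantor.of_nat (f p)).
Definition val (f : nat -> nat) p := Nat.eqb (fst (Cantor.of_nat (snd (Cantor.of_nat (f p))))) 0.
Definition idx (f : nat -> nat) p := snd (Cantor.of_nat (snd (Cantor.of_nat (f p)))).
Definition kind m := fst (Cantor.of_nat m).
Definition arg m := snd (Cantor.of_nat m).

Definition cond (y : cantor) (f : nat -> nat) k p : Prop :=
  y (Cantor.to_nat (p, mOf f p)) = true /\
  match kind (mOf f p) with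
  | 1 => child p 0 < k -> val f (child p 0) = negb (val f p)
  | 2 => (val f p = true -> child p (idx f p) < k -> val f (child p (idx f p)) = true) /\
         (val f p = false -> forall i, child p i < k -> val f (child p i) = false)
  | 3 => val f p = Bool.eqb (y (fst (Cantor.of_nat (arg (mOf f p)))))
                            (Nat.eqb (snd (Cantor.of_nat (arg (mOf f p)))) 1)
  | _ => True
  end.

Definition Tcheck (y : cantor) (f : nat -> nat) k : Prop :=
  (0 < k -> val f 0 = false) /\ forall p, p < k -> cond y f k p.

Definition Pset (y : cantor) : Prop := exists f, forall k, Tcheck y f k.

Lemma child_gt p i : p < child p i.
Proof. unfold child. pose proof (to_nat_ge1 p i). lia. Qed.


Lemma labAt_nnum c a d : sub c a = Some d -> labAt c (nnum a) = lab d.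
Proof. intro H; unfold labAt; rewrite nodeOf_nnum, H; reflexivity. Qed.

Lemma P_enc_1 c : Pset (enc c) -> ~ ev c (enc c).
Proof.
  intros [f Hf]. set (z := enc c).
  assert (Hc : forall p k, p < k -> cond z f k p) by (intros p k Hk; apply (Hf k); auto).
  assert (Hm : forall a d, sub c a = Some d -> mOf f (nnum a) = lab d).
  { intros a d Ha. destruct (Hc (nnum a) (S (nnum a))) as [Hl _]; [lia|].
    unfold z, enc in Hl. rewrite Cantor.cancel_of_to in Hl. apply Nat.eqb_eq in Hl.
    rewrite Hl. apply labAt_nnum; auto. }
  assert (Key : forall d a, sub c a = Some d -> (val f (nnum a) = true <-> ev d z)).
  { induction d; intros a Ha.
    - destruct (Hc (nnum a) (S (nnum a))) as [_ Hk]; [lia|].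
      rewrite (Hm a _ Ha) in Hk. unfold kind, arg, lab in Hk. rewrite !Cantor.cancel_of_to in Hk.
      cbn [fst snd] in Hk. rewrite !Cantor.cancel_of_to in Hk. cbn [fst snd] in Hk.
      simpl ev. rewrite Hk.
      destruct b, (z n); cbn; split; intro HH; try reflexivity; discriminate.
    - destruct (Hc (nnum a) (S (child (nnum a) 0))) as [_ Hk]; [pose proof (child_gt (nnum a) 0); lia|].
      rewrite (Hm a _ Ha) in Hk. unfold kind, lab in Hk. rewrite !Cantor.cancel_of_to in Hk.
      cbn [fst snd] in Hk. specialize (Hk ltac:(lia)).
      assert (Hs : sub c (0 :: a) = Some d) by (simpl; rewrite Ha; reflexivity).
      specialize (IHd _ Hs). simpl nnum in IHd. simpl ev.
      rewrite Hk in IHd. destruct (val f (nnum a)); simpl in *; split; intros; try tauto.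
      intros He; apply IHd in He; discriminate.
      destruct (classic (ev d z)); auto. apply IHd in H0; discriminate.
    - destruct (Hc (nnum a) (S (child (nnum a) (idx f (nnum a))))) as [_ Hk]; [pose proof (child_gt (nnum a) (idx f (nnum a))); lia|].
      rewrite (Hm a _ Ha) in Hk. unfold kind, lab in Hk. rewrite !Cantor.cancel_of_to in Hk.
      cbn [fst snd] in Hk. destruct Hk as [Hk1 Hk2]. simpl ev.
      assert (Hs : forall i, sub c (i :: a) = Some (f0 i)) by (intro i; simpl; rewrite Ha; reflexivity).
      split.
      + intro Hv. exists (idx f (nnum a)). apply (H _ _ (Hs _)). simpl nnum. apply Hk1; [exact Hv| apply Nat.lt_succ_diag_r].
      + intros [i Hi]. destruct (val f (nnum a)) eqn:Ev; auto.
        destruct (Hc (nnum a) (S (child (nnum a) i))) as [_ Hk']; [pose proof (child_gt (nnum a) i); lia|].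
        rewrite (Hm a _ Ha) in Hk'. unfold kind, lab in Hk'. rewrite !Cantor.cancel_of_to in Hk'.
        cbn [fst snd] in Hk'. destruct Hk' as [_ Hk'].
        apply (H _ _ (Hs i)) in Hi. simpl nnum in Hi. rewrite (Hk' Ev i) in Hi; [discriminate|lia]. }
  intro Hev. apply (Key c [] eq_refl) in Hev. simpl in Hev.
  destruct (Hf 1) as [Hr _]. rewrite Hr in Hev; [discriminate|lia].
Qed.

Definition vbit d z := if excluded_middle_informative (ev d z) then 0 else 1.
Definition idxd d z := match d with
  | CU g => match excluded_middle_informative (exists i, ev (g i) z) with
            | left H => proj1_sig (constructive_indefinite_description _ H) | right _ => 0 end
  | _ => 0 end.
Definition wit c z p := match nodeOf p with
  | Some a => match sub c a with Some d => Cantor.to_nat (lab d, Cantor.to_nat (vbit d z, idxd d z)) | None => 0 end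
  | None => 0 end.

Lemma wit_nnum c z a d : sub c a = Some d ->
  wit c z (nnum a) = Cantor.to_nat (lab d, Cantor.to_nat (vbit d z, idxd d z)).
Proof. intro H; unfold wit; rewrite nodeOf_nnum, H; reflexivity. Qed.

Lemma val_node c z a d : sub c a = Some d -> (val (wit c z) (nnum a) = true <-> ev d z).
Proof. intro H. unfold val. rewrite (wit_nnum c z a d H), !Cantor.cancel_of_to. cbn [fst snd].
  rewrite Cantor.cancel_of_to. cbn [fst snd]. unfold vbit.
  destruct excluded_middle_informative; simpl; split; intros; auto; try discriminate; tauto. Qed.

Lemma mOf_node c z a d : sub c a = Some d -> mOf (wit c z) (nnum a) = lab d.
Proof. intro H. unfold mOf. rewrite (wit_nnum c z a d H), !Cantor.cancel_of_to. reflexivity. Qed.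

Lemma P_enc_2 c : ~ ev c (enc c) -> Pset (enc c).
Proof.
  intro Hn. set (z := enc c). exists (wit c z). intro k. split.
  - intros _. destruct (val (wit c z) 0) eqn:E; auto.
    apply (val_node c z [] c eq_refl) in E. contradiction.
  - intros p Hp. unfold cond. destruct (nodeOf p) as [a|] eqn:E1.
    + apply nodeOf_spec in E1. subst p. destruct (sub c a) as [d|] eqn:E2.
      * rewrite (mOf_node c z a d E2). split.
        { unfold z, enc. rewrite Cantor.cancel_of_to. apply Nat.eqb_eq. symmetry. apply labAt_nnum; auto. }
        destruct d; unfold kind, lab, arg; rewrite !Cantor.cancel_of_to; cbn [fst snd].
        -- rewrite !Cantor.cancel_of_to; cbn [fst snd].
           destruct (val (wit c z) (nnum a)) eqn:Ev.
           ++ apply (val_node c z a _ E2) in Ev. simpl in Ev. rewrite Ev. destruct b; reflexivity.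
           ++ destruct (z n) eqn:Ez, b; cbn; auto;
              exfalso; assert (ev (CB n _) z) by (simpl; eassumption);
              apply (val_node c z a _ E2) in H; congruence.
        -- intros _. assert (Hs : sub c (0 :: a) = Some d) by (simpl; rewrite E2; reflexivity).
           change (child (nnum a) 0) with (nnum (0 :: a)).
           destruct (classic (ev d z)) as [Hd|Hd].
           ++ assert (Vc : val (wit c z) (nnum (0 :: a)) = true) by (apply (val_node c z _ _ Hs); auto).
              assert (Vp : val (wit c z) (nnum a) = false).
              { destruct (val (wit c z) (nnum a)) eqn:E; auto. apply (val_node c z _ _ E2) in E. simpl in E. contradiction. }
              rewrite Vc, Vp; reflexivity.
           ++ assert (Vc : val (wit c z) (nnum (0 :: a)) = false).
              { destruct (val (wit c z) (nnum (0 :: a))) eqn:E; auto. apply (val_node c z _ _ Hs) in E. contradiction. }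
              assert (Vp : val (wit c z) (nnum a) = true) by (apply (val_node c z _ _ E2); simpl; auto).
              rewrite Vc, Vp; reflexivity.
        -- assert (Hs : forall i, sub c (i :: a) = Some (f i)) by (intro i; simpl; rewrite E2; reflexivity).
           split.
           ++ intros Hv _. apply (val_node c z _ _ E2) in Hv. simpl in Hv.
              change (child (nnum a) ?x) with (nnum (x :: a)).
              apply (val_node c z _ _ (Hs _)).
              unfold idx. rewrite (wit_nnum c z a _ E2), !Cantor.cancel_of_to. cbn [fst snd].
              rewrite Cantor.cancel_of_to. cbn [fst snd]. simpl idxd.
              destruct excluded_middle_informative as [H|H]; [|contradiction].
              exact (proj2_sig (constructive_indefinite_description _ H)).
           ++ intros Hv i _. change (child (nnum a) i) with (nnum (i :: a)).
              destruct (val (wit c z) (nnum (i :: a))) eqn:Ec; auto.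
              apply (val_node c z _ _ (Hs _)) in Ec.
              assert (ev (CU f) z) by (exists i; auto).
              apply (val_node c z _ _ E2) in H. congruence.
      * unfold mOf. unfold wit. rewrite nodeOf_nnum, E2. change (fst (Cantor.of_nat 0)) with 0. split; [|exact I].
        unfold z, enc. rewrite Cantor.cancel_of_to. unfold labAt. rewrite nodeOf_nnum, E2. reflexivity.
    + unfold mOf, wit. rewrite E1. change (fst (Cantor.of_nat 0)) with 0. split; [|exact I].
      unfold z, enc. rewrite Cantor.cancel_of_to. unfold labAt. rewrite E1. reflexivity.
Qed.

Lemma P_enc c : Pset (enc c) <-> ~ ev c (enc c).
Proof. split; [apply P_enc_1|apply P_enc_2]. Qed.

Lemma P_not_borel : ~ borel Pset.
Proof.
  intro H. destruct (borel_code _ H) as [c Hc].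
  pose proof (P_enc c). rewrite Hc in H0. tauto.
Qed.


Fixpoint code_bits (y : cantor) N : nat :=
  match N with 0 => 0 | S N => Cantor.to_nat (code_bits y N, if y N then 1 else 0) end.

Lemma code_bits_local y y' N : (forall q, q < N -> y q = y' q) -> code_bits y N = code_bits y' N.
Proof. induction N; intros H; simpl; auto. rewrite IHN by (intros; apply H; lia). rewrite (H N) by lia. auto. Qed.

Lemma code_bits_inj y y' N : code_bits y N = code_bits y' N -> forall q, q < N -> y q = y' q.
Proof. induction N; intros H q Hq; [lia|]. cbn [code_bits] in H. apply Cantor.to_nat_inj in H.
  injection H; intros H1 H2. destruct (Nat.eq_dec q N).
  - subst. destruct (y N), (y' N); simpl in H1; congruence.
  - apply IHN; auto. lia. Qed.

Definition H v := S (Cantor.to_nat (v, v) + v).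
Definition phi (y : cantor) v := Cantor.to_nat (v, code_bits y (H v)).
Definition xmap (y : cantor) : cantor := fun m => let (v, cb) := Cantor.of_nat m in Nat.eqb cb (code_bits y (H v)).

Lemma xmap_phi y v : xmap y (phi y v) = true.
Proof. unfold xmap, phi. rewrite Cantor.cancel_of_to. apply Nat.eqb_refl. Qed.
Lemma xmap_spec y m : xmap y m = true -> m = phi y (fst (Cantor.of_nat m)).
Proof. intro E. unfold xmap in E. destruct (Cantor.of_nat m) as [v cb] eqn:Em.
  apply Nat.eqb_eq in E. rewrite <- (Cantor.cancel_to_of m), Em. unfold phi. cbn [fst]. subst; reflexivity. Qed.
Lemma phi_fst y v : fst (Cantor.of_nat (phi y v)) = v.
Proof. unfold phi; rewrite Cantor.cancel_of_to; auto. Qed.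
Lemma phi_ge y v : v <= phi y v.
Proof. apply to_nat_ge1. Qed.
Lemma xmap_phi' y y' v : xmap y (phi y' v) = true -> forall q, q < H v -> y q = y' q.
Proof. unfold xmap, phi. rewrite Cantor.cancel_of_to. intro E; apply Nat.eqb_eq in E.
  intros q Hq. symmetry. apply (code_bits_inj _ _ _ E); auto. Qed.

Lemma borel_fun_xmap : borel_fun xmap.
Proof.
  apply borel_fun_of_coord. intros m b.
  apply (borel_local (H (fst (Cantor.of_nat m)))).
  intros y y' Hyy' E. rewrite <- E. unfold xmap. destruct (Cantor.of_nat m) as [v cb].
  cbn [fst] in Hyy'. rewrite (code_bits_local y' y); auto. intros; symmetry; auto.
Qed.

Lemma mOf_le f p : mOf f p <= f p.
Proof. apply of_nat_le1. Qed.

Lemma Tcheck_local y y' f k v : (forall j, j < k -> f j <= v) -> k <= S v ->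
  (forall q, q < H v -> y q = y' q) -> Tcheck y f k -> Tcheck y' f k.
Proof.
  intros Hf Hk Hy [Hr Hc]. split; auto. intros p Hp. destruct (Hc p Hp) as [H1 H2]. split.
  - rewrite <- Hy; auto. unfold H. pose proof (mOf_le f p). pose proof (Hf p Hp).
    pose proof (to_nat_mono p (mOf f p) v v ltac:(lia) ltac:(lia)). lia.
  - destruct (kind (mOf f p)) as [|[|[|[|]]]]; auto.
    rewrite H2. f_equal. apply Hy. unfold H.
    pose proof (of_nat_le1 (arg (mOf f p))). pose proof (of_nat_le2 (mOf f p)).
    unfold arg in *. pose proof (mOf_le f p). pose proof (Hf p Hp). lia.
Qed.

Lemma Tcheck_mono y f k k' : Tcheck y f k -> k' <= k -> Tcheck y f k'.
Proof.
  intros [Hr Hc] Hk. split. intro; apply Hr; lia.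
  intros p Hp. destruct (Hc p ltac:(lia)) as [H1 H2]. split; auto.
  destruct (kind (mOf f p)) as [|[|[|[|]]]]; auto.
  - intro; apply H2; lia.
  - destruct H2 as [H2 H3]; split. intros; apply H2; auto; lia. intros; apply H3; auto; lia.
Qed.

Lemma Tcheck_ext y f g k : (forall j, j < k -> f j = g j) -> Tcheck y f k -> Tcheck y g k.
Proof.
  intros E [Hr Hc]. split.
  - intro H0. unfold val in *. rewrite <- E; auto.
  - intros p Hp. destruct (Hc p Hp) as [H1 H2].
    assert (Ev : forall q, q < k -> val g q = val f q) by (intros; unfold val; rewrite E; auto).
    assert (Em : mOf g p = mOf f p) by (unfold mOf; rewrite E; auto).
    assert (Ei : idx g p = idx f p) by (unfold idx; rewrite E; auto).
    split. rewrite Em; auto.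
    rewrite Em. destruct (kind (mOf f p)) as [|[|[|[|]]]]; auto.
    + intro Hc0. rewrite !Ev; auto.
    + rewrite Ei, (Ev p Hp). destruct H2 as [H2 H3]; split.
      intros; rewrite Ev; auto. intros; rewrite Ev; auto.
    + rewrite (Ev p Hp). rewrite H2. reflexivity.
Qed.


Definition updf (f : nat -> nat) k i : nat -> nat := fun j => if j =? k then i else f j.

Lemma finite_max (Q : nat -> nat -> Prop) B :
  (forall i m m', Q i m -> m <= m' -> Q i m') ->
  (forall i, i <= B -> exists m, Q i m) -> exists M, forall i, i <= B -> Q i M.
Proof.
  intros Hm. induction B; intros HB.
  - destruct (HB 0 (le_n 0)) as [m Hm0]. exists m. intros i Hi. replace i with 0 by lia. auto.
  - destruct IHB as [M HM]. intros; apply HB; lia.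
    destruct (HB (S B) (le_n _)) as [m Hm0]. exists (max M m). intros i Hi.
    destruct (Nat.eq_dec i (S B)). subst. apply (Hm _ m); auto; lia.
    apply (Hm _ M); auto. apply HM; lia. lia.
Qed.

Section Konig.
Variable T : (nat -> nat) -> nat -> Prop.
Hypothesis T1 : forall f k k', T f k -> k' <= k -> T f k'.
Hypothesis T2 : forall f g k, (forall j, j < k -> f j = g j) -> T f k -> T g k.
Variable e : nat -> nat.
Hypothesis Hex : forall k, exists f, (forall j, j < k -> f j <= e j) /\ T f k.

Definition Good f k := forall m, k <= m -> exists g, (forall j, j < k -> g j = f j) /\
  (forall j, j < m -> g j <= e j) /\ T g m.

Lemma good_step f k : Good f k -> exists i, Good (updf f k i) (S k).
Proof.
  intros HG. apply NNPP. intro Hn.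
  assert (Hb : forall i, i <= e k -> exists m, S k <= m /\ ~ exists g, (forall j, j < S k -> g j = updf f k i j) /\
      (forall j, j < m -> g j <= e j) /\ T g m).
  { intros i _. apply NNPP; intro H1. apply Hn. exists i. intros m Hm. apply NNPP; intro H2. apply H1. eauto. }
  destruct (finite_max (fun i M => S k <= M /\ ~ exists g, (forall j, j < S k -> g j = updf f k i j) /\
      (forall j, j < M -> g j <= e j) /\ T g M) (e k)) as [M HM].
  { intros i m m' [H1 H2] Hmm. split. lia. intros [g [G1 [G2 G3]]]. apply H2. exists g.
    split; auto. split. intros; apply G2; lia. apply (T1 _ m'); auto. }
  { exact Hb. }
  destruct (HM 0 (Nat.le_0_l _)) as [HMk _].
  destruct (HG M ltac:(lia)) as [g [G1 [G2 G3]]].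
  destruct (HM (g k) (G2 k ltac:(lia))) as [_ HM2]. apply HM2. exists g. split; auto.
  intros j Hj. unfold updf. destruct (j =? k) eqn:E. apply Nat.eqb_eq in E; subst; auto.
  apply Nat.eqb_neq in E. apply G1. lia.
Qed.

Definition ch f k : nat :=
  match excluded_middle_informative (exists i, Good (updf f k i) (S k)) with
  | left H => proj1_sig (constructive_indefinite_description _ H) | right _ => 0 end.

Fixpoint fs n : nat -> nat := match n with 0 => fun _ => 0 | S n => updf (fs n) n (ch (fs n) n) end.

Lemma fs_good n : Good (fs n) n.
Proof.
  induction n.
  - intros m _. destruct (Hex m) as [g [G1 G2]]. exists g. split; auto. intros; lia.
  - simpl. unfold ch. destruct excluded_middle_informative as [H|H].
    + exact (proj2_sig (constructive_indefinite_description _ H)).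
    + exfalso. apply H. apply good_step; auto.
Qed.

Lemma fs_stable j n : j < n -> fs n j = fs (S j) j.
Proof.
  induction n; intros Hj. lia.
  destruct (Nat.eq_dec j n). subst; auto.
  simpl. unfold updf. destruct (j =? n) eqn:E. apply Nat.eqb_eq in E; lia.
  rewrite IHn by lia. reflexivity.
Qed.

Lemma konig : exists b, forall k, T b k.
Proof.
  exists (fun j => fs (S j) j). intro k.
  destruct (fs_good k k (le_n _)) as [g [G1 [_ G3]]].
  apply (T2 g); auto. intros j Hj. rewrite G1; auto. apply fs_stable; auto.
Qed.
End Konig.

Local Open Scope bool_scope.

Definition OK y t k := exists f, (forall j, j < k -> f j <= t j) /\ Tcheck y f k.

Fixpoint img (y : cantor) (t : nat -> nat) k (m : nat) : bool :=
  match k with 0 => false | S k => img y t k m || Nat.eqb m (phi y (t k)) end.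

Lemma img_spec y t k m : img y t k m = true <-> exists j, j < k /\ m = phi y (t j).
Proof.
  induction k; simpl. split; [discriminate|]. intros [j [Hj _]]; lia.
  rewrite Bool.orb_true_iff, IHk, Nat.eqb_eq. split.
  - intros [[j [Hj E]]|E]. exists j; split; auto; lia. exists k; auto.
  - intros [j [Hj E]]. destruct (Nat.eq_dec j k). subst; auto. left; exists j; split; auto; lia.
Qed.

Lemma img_finite y t k : finite_set (img y t k).
Proof.
  induction k. exists 0; simpl; discriminate.
  destruct IHk as [N HN]. exists (max N (S (phi y (t k)))). intros m Hm. simpl in Hm.
  apply Bool.orb_true_iff in Hm. destruct Hm as [Hm|Hm]. apply HN in Hm; lia.
  apply Nat.eqb_eq in Hm; lia.
Qed.

Definition Fam (s : cantor) : Prop := finite_set s /\ exists y t k,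
  (forall j, S j < k -> t j < t (S j)) /\
  (forall m, s m = true <-> exists j, j < k /\ m = phi y (t j)) /\ ~ OK y t k.

Lemma phi_bound y n : exists M, forall v, v < n -> phi y v < M.
Proof. induction n. exists 0; intros; lia. destruct IHn as [M HM]. exists (max M (S (phi y n))).
  intros v Hv. destruct (Nat.eq_dec v n). subst; lia. specialize (HM v ltac:(lia)); lia. Qed.

Lemma Vinf y Z : subset Z (xmap y) -> infinite_set Z -> forall n, exists v, n <= v /\ Z (phi y v) = true.
Proof.
  intros Hs Hi n. destruct (phi_bound y n) as [M HM]. destruct (Hi M) as [m [Hm Zm]].
  pose proof (xmap_spec y m (Hs m Zm)) as E. exists (fst (Cantor.of_nat m)). split.
  - destruct (le_lt_dec n (fst (Cantor.of_nat m))) as [l|l]; auto. apply HM in l. lia.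
  - rewrite <- E; auto.
Qed.

Lemma dir1 y Z : subset Z (xmap y) -> infinite_set Z ->
  (forall s, finite_set s -> subset s Z -> ~ Fam s) -> Pset y.
Proof.
  intros Hs Hi Hb.
  assert (Hg : exists g : nat -> nat, forall n, n <= g n /\ Z (phi y (g n)) = true).
  { exists (fun n => proj1_sig (constructive_indefinite_description _ (Vinf y Z Hs Hi n))).
    intro n. exact (proj2_sig (constructive_indefinite_description _ (Vinf y Z Hs Hi n))). }
  destruct Hg as [g Hg].
  set (e := fix e j := match j with 0 => g 0 | S j => g (S (e j)) end).
  assert (He : forall j, e j < e (S j)) by (intro j; simpl; destruct (Hg (S (e j))); lia).
  assert (HeZ : forall j, Z (phi y (e j)) = true) by (intros [|j]; simpl; apply Hg).
  assert (HOK : forall k, OK y e k).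
  { intro k. apply NNPP. intro Hn. apply (Hb (img y e k)).
    - apply img_finite.
    - intros m Hm. apply img_spec in Hm. destruct Hm as [j [_ E]]. subst; auto.
    - split. apply img_finite. exists y, e, k. split; [intros; apply He|]. split; auto. intro; apply img_spec. }
  destruct (konig (Tcheck y) (Tcheck_mono y) (fun f g k E H => Tcheck_ext y f g k E H) e) as [b Hbr].
  - intro k. destruct (HOK k) as [f [F1 F2]]. exists f; auto.
  - exists b; auto.
Qed.

Section Dir2.
Variable y : cantor.
Variable Z : cantor.
Hypothesis Hs : subset Z (xmap y).
Hypothesis Hi : infinite_set Z.
Variable b : nat -> nat.
Hypothesis Hb : forall k, Tcheck y b k.

Fixpoint Bm j := match j with 0 => b 0 | S j => max (Bm j) (b (S j)) end.
Lemma Bm_ge j : b j <= Bm j. Proof. destruct j; simpl; lia. Qed.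
Lemma Bm_mono i j : i <= j -> Bm i <= Bm j.
Proof. induction j; intros H0. replace i with 0 by lia; auto.
  destruct (Nat.eq_dec i (S j)). subst; auto. simpl. specialize (IHj ltac:(lia)). lia. Qed.

Definition Vb v := Z (phi y v).
Fixpoint aux v := match v with 0 => 0 | S v => aux v + (if Vb v && (Bm (aux v) <=? v) then 1 else 0) end.
Definition V' v := Vb v && (Bm (aux v) <=? v).

Lemma aux_mono v w : v <= w -> aux v <= aux w.
Proof. induction w; intros H0. replace v with 0 by lia; auto.
  destruct (Nat.eq_dec v (S w)). subst; auto. simpl. specialize (IHw ltac:(lia)). lia. Qed.
Lemma aux_step w v : V' w = true -> w < v -> aux w < aux v.
Proof. intros Hw Hv. pose proof (aux_mono (S w) v ltac:(lia)) as HH. simpl in HH.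
  unfold V' in Hw. rewrite Hw in HH. lia. Qed.

Lemma V'inf n : exists v, n <= v /\ V' v = true.
Proof.
  apply NNPP; intro Hn.
  assert (Hc : forall v, n <= v -> aux v = aux n).
  { induction v; intros Hv. replace n with 0 by lia; auto.
    destruct (Nat.eq_dec n (S v)). subst; auto. simpl. rewrite IHv by lia.
    destruct (Vb v && (Bm (aux n) <=? v)) eqn:E; [|lia]. exfalso; apply Hn. exists v. split. lia.
    unfold V'. rewrite IHv by lia. auto. }
  destruct (Vinf y Z Hs Hi (max n (Bm (aux n)))) as [v [Hv Zv]]. apply Hn. exists v. split. lia.
  unfold V', Vb. rewrite Zv, Hc by lia. simpl. apply Nat.leb_le. lia.
Qed.

Lemma dir2 : (forall z, subset z Z -> infinite_set z -> exists s, Fam s /\ init_seg s z) -> False.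
Proof.
  intros Ha.
  set (Z' := fun m => xmap y m && V' (fst (Cantor.of_nat m))).
  assert (HZ'Z : subset Z' Z).
  { intros m Hm. unfold Z' in Hm. apply andb_prop in Hm. destruct Hm as [H1 H2].
    rewrite (xmap_spec y m H1). unfold V', Vb in H2. apply andb_prop in H2. tauto. }
  assert (HZ'i : infinite_set Z').
  { intros n. destruct (V'inf n) as [v [Hv Vv]]. exists (phi y v). split.
    pose proof (phi_ge y v); lia. unfold Z'. rewrite xmap_phi, phi_fst, Vv; reflexivity. }
  destruct (Ha Z' HZ'Z HZ'i) as [s [[_ [y' [t [k [Hinc [Hst HnOK]]]]]] [N HN]]].
  apply HnOK.
  assert (Hin : forall j, j < k -> Z' (phi y' (t j)) = true).
  { intros j Hj. assert (HH : s (phi y' (t j)) = true) by (apply Hst; eauto).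
    rewrite HN in HH. apply andb_prop in HH; tauto. }
  assert (HV : forall j, j < k -> V' (t j) = true).
  { intros j Hj. specialize (Hin j Hj). unfold Z' in Hin. rewrite phi_fst in Hin.
    apply andb_prop in Hin; tauto. }
  assert (Hge : forall j, j < k -> j <= t j).
  { induction j; intros Hj. lia. specialize (IHj ltac:(lia)). specialize (Hinc j Hj). lia. }
  assert (Hmono : forall i j, i <= j -> j < k -> t i <= t j).
  { intros i j Hij. induction j; intros Hj. replace i with 0 by lia; auto.
    destruct (Nat.eq_dec i (S j)). subst; auto. specialize (IHj ltac:(lia) ltac:(lia)).
    specialize (Hinc j Hj). lia. }
  assert (Haux : forall j, j < k -> j <= aux (t j)).
  { induction j; intros Hj. lia. specialize (IHj ltac:(lia)).
    pose proof (aux_step (t j) (t (S j)) (HV j ltac:(lia)) (Hinc j Hj)). lia. }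
  assert (Hdom : forall j, j < k -> b j <= t j).
  { intros j Hj. pose proof (Bm_ge j). pose proof (Bm_mono _ _ (Haux j Hj)).
    pose proof (HV j Hj) as Hv. unfold V' in Hv. apply andb_prop in Hv. destruct Hv as [_ Hv].
    apply Nat.leb_le in Hv. lia. }
  exists b. split; auto. destruct k as [|k0].
  - split; intros; lia.
  - apply (Tcheck_local y y' b (S k0) (t k0)).
    + intros j Hj. pose proof (Hdom j Hj). pose proof (Hmono j k0 ltac:(lia) ltac:(lia)). lia.
    + pose proof (Hge k0 ltac:(lia)). lia.
    + specialize (Hin k0 ltac:(lia)). unfold Z' in Hin. apply andb_prop in Hin.
      destruct Hin as [Hin _]. exact (xmap_phi' y y' (t k0) Hin).
    + apply Hb.
Qed.
End Dir2.

Theorem mainTheorem3 :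
  exists F : cantor -> Prop,
    family_of_finite F /\
    ~ (exists S : cantor -> cantor,
          borel_fun S /\
          forall x : cantor, infinite_set x ->
            subset (S x) x /\ infinite_set (S x) /\ in_hom F (S x)).
Proof.
  exists Fam. split. intros s [H0 _]; exact H0.
  intros [S [HS Hsel]].
  assert (Xi : forall y, infinite_set (xmap y)).
  { intros y n. exists (phi y n). split. apply phi_ge. apply xmap_phi. }
  set (QN := fun N (w : cantor) => exists s, (forall m, s m = true -> m < N) /\ subset s w /\ Fam s).
  assert (BQ : borel (fun w => exists N, QN N w)).
  { apply borel_union. intro N. apply (borel_local N). intros w w' Hww' [s [S1 [S2 S3]]].
    exists s. split; auto. split; auto. intros m Hm. rewrite <- Hww'; auto. }
  assert (BE : borel (fun y => exists N, QN N (S (xmap y)))).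
  { apply (borel_fun_xmap (fun x => exists N, QN N (S x))). apply (HS _ BQ). }
  assert (Equiv : forall y, (exists N, QN N (S (xmap y))) <-> ~ Pset y).
  { intro y. destruct (Hsel (xmap y) (Xi y)) as [Hsub [Hinf [_ Hhom]]]. split.
    - intros [N [s [S1 [S2 S3]]]] [b Hb]. destruct Hhom as [Ha|Hbb].
      + exact (dir2 y (S (xmap y)) Hsub Hinf b Hb Ha).
      + apply (Hbb s); auto. exists N; auto.
    - intros Hn. apply NNPP. intro HE. apply Hn. apply (dir1 y (S (xmap y)) Hsub Hinf).
      intros s [N HN] Hss Hf. apply HE. exists N, s. auto. }
  apply P_not_borel.
  apply borel_ext with (A := fun y => ~ exists N, QN N (S (xmap y))).
  - apply borel_compl; auto.
  - intro y. rewrite Equiv. tauto.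
Qed.
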